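(* Assume all agents share a common sense of direction. Then the leader election problem can be solved in $O(\log^2 N)$ rounds in the basic model with $n$ even, and in $\log N$ rounds in the other settings (the basic model with $n$ odd, the lazy model, and the perceptive model).
   Context: Model: $n>4$ agents are at distinct, arbitrary initial positions on a circle of circumference $1$ and act in synchronised unit-time rounds. At the start of a round each agent chooses a direction and moves at unit speed. Agents never pass: two moving agents that collide instantly reverse direction, and a moving agent hitting an idle one becomes idle while the idle one starts moving in the former's direction. There is no communication. At the end of each round an agent learns the clockwise distance from its start-of-round to its end-of-round position. The three models differ as follows: - Basic: direction in $\{\text{right},\text{left}\}$. - Lazy: direction in $\{\text{idle},\text{right},\text{left}\}$. - Perceptive: as basic, plus the agent learns the distance from its start position to its first collision in the round. Agents have distinct IDs in $\{1,\dots,N\}$, $N\ge n$ known, and know the parity of $n$. Leader election is solved when exactly one agent has status ''leader'' and all others ''non-leader''. *)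

(* Defs.v *)
From HB Require Import structures.
From mathcomp Require Import all_boot all_order all_algebra.
From mathcomp Require Import reals.
Set Implicit Arguments.
Unset Strict Implicit.
Unset Printing Implicit Defensive.
Import Order.TTheory GRing.Theory Num.Theory.
Local Open Scope ring_scope.

(* Circle of circumference 1 represented by [0,1) in a real type R.
   With a common sense of direction, "right" = clockwise = increasing
   coordinate (mod 1) for every agent. *)
Definition frac1 (R : realType) (x : R) : R := x - (Num.floor x)%:~R.

Definition cwd (R : realType) (x y : R) : R := frac1 (y - x).

Inductive model := Basic | Lazy | Perceptive.
Inductive dir := Idle | Right | Left.

Definition allowed (m : model) (d : dir) : bool :=
  match m, d with
  | Lazy, _ => true
  | _, Idle => false
  | _, _ => true
  end.

Definition is_right (d : dir) : bool := if d is Right then true else false.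
Definition is_left (d : dir) : bool := if d is Left then true else false.

(* The collision dynamics (moving agents that collide
   reverse; a moving agent hitting an idle one stops and the idle one moves
   on) is modelled through its exact "baton passing" description: the set of
   occupied positions after a unit-time round is the initial one, cyclic order
   is preserved, and every agent is rotated by (#right - #left) positions
   clockwise along the cyclic order. *)
Section Round.
Variables (R : realType) (n : nat) (p : 'I_n -> R) (d : 'I_n -> dir).

Definition shift : int :=
  (#|[set k | is_right (d k)]|%:Z - #|[set k | is_left (d k)]|%:Z)%R.

Definition cw_rank (k m : 'I_n) : nat :=
  #|[set m' | cwd (p k) (p m') < cwd (p k) (p m)]|.
Definition ccw_rank (k m : 'I_n) : nat :=
  #|[set m' | cwd (p m') (p k) < cwd (p m) (p k)]|.

Definition new_pos (k : 'I_n) : R :=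
  if [pick m | cw_rank k m == `|modz shift n|%N] is Some m then p m else p k.

Definition displacement (k : 'I_n) : R := cwd (p k) (new_pos k).

(* distance travelled from the start position to the first collision
   (None if the agent does not collide during the round) *)
Definition first_collision (k : 'I_n) : option R :=
  match d k with
  | Right =>
    if [pick m | is_left (d m) &&
          [forall m', is_left (d m') ==> (cw_rank k m <= cw_rank k m')%N]]
    is Some m then Some (cwd (p k) (p m) / 2) else None
  | Left =>
    if [pick m | is_right (d m) &&
          [forall m', is_right (d m') ==> (ccw_rank k m <= ccw_rank k m')%N]]
    is Some m then Some (cwd (p m) (p k) / 2) else None
  | Idle => None
  end.

Definition observation (mo : model) (k : 'I_n) : R * option R :=
  (displacement k, if mo is Perceptive then first_collision k else None).

End Round.

(* A deterministic algorithm: the agent's choice in each round and its final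
   status depend only on its ID and its history of observations (N and the
   parity of n are fixed beforehand, see [solves]). *)
Record algorithm (R : realType) := Algo {
  rounds : nat;
  choose : nat -> seq (R * option R) -> dir;
  decide : nat -> seq (R * option R) -> bool (* true = leader *)
}.

Definition valid (R : realType) (mo : model) (alg : algorithm R) : Prop :=
  forall i h, allowed mo (choose alg i h).

Fixpoint run (R : realType) (mo : model) (alg : algorithm R) (n : nat)
  (ids : 'I_n -> nat) (p0 : 'I_n -> R) (t : nat)
  : ('I_n -> R) * ('I_n -> seq (R * option R)) :=
  match t with
  | 0 => (p0, fun _ => [::])
  | t'.+1 =>
    let: (p, h) := run mo alg ids p0 t' in
    let d := fun k => choose alg (ids k) (h k) in
    (new_pos p d, fun k => rcons (h k) (observation p d mo k))
  end.

Definition leader_elected (R : realType) (alg : algorithm R) (n : nat)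
  (ids : 'I_n -> nat) (h : 'I_n -> seq (R * option R)) : Prop :=
  exists k : 'I_n, forall j : 'I_n, decide alg (ids j) (h j) = (j == k).

Definition solves (R : realType) (mo : model) (N : nat) (par : bool)
  (alg : algorithm R) : Prop :=
  forall n : nat, (4 < n)%N -> (n <= N)%N -> odd n = par ->
  forall ids : 'I_n -> nat, injective ids -> (forall k, 0 < ids k <= N)%N ->
  forall p : 'I_n -> R, (forall k, 0 <= p k < 1) -> injective p ->
  leader_elected alg ids (run mo alg ids p (rounds alg)).2.

(* Main.v *)
Require Import Defs.
From HB Require Import structures.
From mathcomp Require Import all_boot all_order all_algebra.
From mathcomp Require Import reals.
From mathcomp Require Import zify ring lra.
From Stdlib Require Import FunctionalExtensionality.

Module GeoM.
Set Implicit Arguments.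
Unset Strict Implicit.
Unset Printing Implicit Defensive.
Import Order.TTheory GRing.Theory Num.Theory.
Local Open Scope ring_scope.

Section Frac.
Variable R : realType.
Implicit Types x y z w : R.

Lemma intr1 : (1%:~R : R) = 1. Proof. by []. Qed.
Lemma intrN1 : ((-1)%:~R : R) = -1. Proof. by rewrite intrN. Qed.

Lemma frac1_ge0 x : 0 <= frac1 x.
Proof. by rewrite /frac1 subr_ge0 floor_le. Qed.

Lemma frac1_lt1 x : frac1 x < 1.
Proof.
by rewrite /frac1 ltrBlDr addrC -[1]intr1 -intrD floorD1_gt.
Qed.

Lemma frac1_eq z w (i : int) : 0 <= w -> w < 1 -> z - w = i%:~R -> frac1 z = w.
Proof.
move=> w0 w1 e.
have fz : Num.floor z = i.
  apply: floor_def; rewrite intrD intr1.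
  have -> : z = w + i%:~R by rewrite -e; ring.
  apply/andP; split; lra.
rewrite /frac1 fz -e; ring.
Qed.

Lemma int_small (i : int) : -1 < (i%:~R : R) -> (i%:~R : R) < 1 -> i = 0.
Proof.
rewrite -[1]intr1 -[-1]intrN1 !ltr_int => h1 h2; lia.
Qed.

Lemma pt_int x y (i : int) : 0 <= x < 1 -> 0 <= y < 1 -> x - y = i%:~R -> x = y.
Proof.
move=> /andP[x0 x1] /andP[y0 y1] e.
have : i = 0 by apply: int_small; rewrite -e; lra.
by move=> i0; move: e; rewrite i0 => /eqP; rewrite subr_eq0 => /eqP.
Qed.

Lemma frac1E x : x - frac1 x = (Num.floor x)%:~R.
Proof. rewrite /frac1; ring. Qed.

Lemma frac1_0 : frac1 (0 : R) = 0.
Proof. by apply: (@frac1_eq _ _ 0) => //; rewrite subr0. Qed.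

Lemma frac1_shift x y z :
  frac1 (z - x) = if frac1 (z - y) + frac1 (y - x) < 1
                  then frac1 (z - y) + frac1 (y - x)
                  else frac1 (z - y) + frac1 (y - x) - 1.
Proof.
have h1 := frac1E (z - y); have h2 := frac1E (y - x).
have a0 := frac1_ge0 (z - y); have b0 := frac1_ge0 (y - x).
have a1 := frac1_lt1 (z - y); have b1 := frac1_lt1 (y - x).
case: ifP => h.
- apply: (@frac1_eq _ _ (Num.floor (z - y) + Num.floor (y - x))).
  + lra.
  + exact: h.
  + rewrite intrD -h1 -h2; ring.
- apply: (@frac1_eq _ _ (Num.floor (z - y) + Num.floor (y - x) + 1)).
  + move/negbT: h; rewrite -leNgt; lra.
  + lra.
  + rewrite !intrD intr1 -h1 -h2; ring.
Qed.

Lemma frac1_opp x y : frac1 (y - x) != 0 -> frac1 (x - y) = 1 - frac1 (y - x).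
Proof.
move=> nz; have h := frac1E (y - x).
have a0 := frac1_ge0 (y - x); have a1 := frac1_lt1 (y - x).
have a2 : 0 < frac1 (y - x) by rewrite lt_neqAle eq_sym nz a0.
apply: (@frac1_eq _ _ (- Num.floor (y - x) - 1)); try lra.
all: try (rewrite intrD intrN intrN1 -h; ring).
Qed.

End Frac.

Section Geo.
Variables (R : realType) (n : nat) (p : 'I_n -> R).
Hypothesis hp : forall k, 0 <= p k < 1.
Hypothesis hinj : injective p.

Local Notation v k m := (cwd (p k) (p m)).

Lemma v_eq k m m' : v k m = v k m' -> m = m'.
Proof.
rewrite /cwd => e; apply: hinj.
apply: (@pt_int _ _ _ (Num.floor (p m - p k) - Num.floor (p m' - p k))) => //.
rewrite intrD intrN -!frac1E e; ring.
Qed.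

Lemma v_self k : v k k = 0.
Proof. by rewrite /cwd subrr frac1_0. Qed.

Lemma v_eq0 k m : v k m = 0 -> m = k.
Proof. by rewrite -(v_self k) => /v_eq. Qed.

Lemma v_ge0 k m : 0 <= v k m. Proof. exact: frac1_ge0. Qed.
Lemma v_lt1 k m : v k m < 1. Proof. exact: frac1_lt1. Qed.

Lemma rank_self k : cw_rank p k k = 0%N.
Proof.
rewrite /cw_rank v_self; apply/eqP; rewrite cards_eq0; apply/eqP/setP => m.
by rewrite !inE ltNge v_ge0.
Qed.

Lemma rank_lt k m : (cw_rank p k m < n)%N.
Proof.
rewrite /cw_rank -[n in (_ < n)%N]card_ord -cardsT; apply: proper_card.
rewrite properT; apply/negP => /eqP e.
by have := in_setT m; rewrite -e inE ltxx.
Qed.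

Lemma rank_mono k m m' : v k m < v k m' -> (cw_rank p k m < cw_rank p k m')%N.
Proof.
move=> h; apply: proper_card; apply/properP; split.
  by apply/subsetP => x; rewrite !inE => /lt_trans; apply.
by exists m; rewrite !inE ?h // ltxx.
Qed.

Lemma rank_inj k m m' : cw_rank p k m = cw_rank p k m' -> m = m'.
Proof.
move=> e; case: (ltgtP (v k m) (v k m')) => h.
- by have := rank_mono h; rewrite e ltnn.
- by have := rank_mono h; rewrite e ltnn.
- exact: (v_eq h).
Qed.

Lemma rank_surj k r : (r < n)%N -> exists m, cw_rank p k m = r.
Proof.
move=> hr.
pose g := fun m => Ordinal (rank_lt k m).
have gi : injective g by move=> a b /(congr1 val) /= /rank_inj.
have [ginv _ gK] := injF_bij gi.
exists (ginv (Ordinal hr)).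
by have := congr1 val (gK (Ordinal hr)).
Qed.

Lemma rank_key k k' m : k != k' -> v k' m < 1 - v k k' ->
  (cw_rank p k' m < cw_rank p k m)%N.
Proof.
move=> nk h.
have c0 : v k k' != 0 by apply/eqP => /v_eq0 /eqP; rewrite eq_sym (negbTE nk).
have ck : v k' k = 1 - v k k' by rewrite /cwd frac1_opp.
have sh : forall m', v k' m' < 1 - v k k' -> v k m' = v k' m' + v k k'.
  move=> m' hm'; rewrite /cwd (frac1_shift _ (p k')).
  by rewrite ifT //; rewrite /cwd in hm'; lra.
have mk : m != k by apply/eqP => e; move: h; rewrite e ck ltxx.
apply: proper_card; apply/properP; split.
  apply/subsetP => x; rewrite !inE => hx.
  have hx' : v k' x < 1 - v k k' by apply: lt_trans h.
  by rewrite (sh x hx') (sh m h); lra.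
exists k; rewrite !inE ?v_self.
  by rewrite lt_neqAle v_ge0 andbT eq_sym; apply/eqP => /v_eq0 /eqP; rewrite (negbTE mk).
by rewrite ck -leNgt ltW.
Qed.

Lemma rank_eq k k' m : cw_rank p k m = cw_rank p k' m -> k = k'.
Proof.
move=> e; apply/eqP/negPn/negP => nk.
have [h|h] := ltP (v k' m) (1 - v k k').
  by have := rank_key nk h; rewrite e ltnn.
have nk' : k' != k by rewrite eq_sym.
have c0 : v k k' != 0 by apply/eqP => /v_eq0 /eqP; rewrite eq_sym (negbTE nk).
have ck : v k' k = 1 - v k k' by rewrite /cwd frac1_opp.
have : v k m < 1 - v k' k.
  rewrite ck /cwd (frac1_shift _ (p k')) ifF.
    have := v_lt1 k' m; rewrite /cwd; lra.
  by apply/negbTE; rewrite -leNgt; rewrite /cwd in h; lra.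
by move/(rank_key nk'); rewrite e ltnn.
Qed.

Hypothesis n0 : (0 < n)%N.

Lemma r_lt (z : int) : (absz (modz z n) < n)%N.
Proof.
have h1 : (0 <= modz z n)%R by apply: modz_ge0; rewrite -lt0n.
have h2 : (modz z n < n%:Z)%R by apply: ltz_pmod.
lia.
Qed.

Lemma new_posE d k : exists m, new_pos p d k = p m /\ cw_rank p k m = absz (modz (shift d) n).
Proof.
rewrite /new_pos; case: pickP => [m /eqP hm | hn]; first by exists m.
have [m hm] := rank_surj k (r_lt (shift d)).
by have := hn m; rewrite hm eqxx.
Qed.

Lemma new_pos_inj d : injective (new_pos p d).
Proof.
move=> k k'.
have [m [-> hm]] := new_posE d k; have [m' [-> hm']] := new_posE d k'.
move/hinj => e; move: hm'; rewrite -e -hm; move=> h; exact: (rank_eq (esym h)).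
Qed.

Lemma new_pos_rng d k : 0 <= new_pos p d k < 1.
Proof. by have [m [-> _]] := new_posE d k. Qed.

Lemma disp_ne0 d k : (displacement p d k != 0) = (absz (modz (shift d) n) != 0%N).
Proof.
rewrite /displacement; have [m [-> hm]] := new_posE d k.
rewrite -hm; apply/idP/idP.
  apply: contraNN => /eqP h.
  by rewrite -(rank_self k) in h; rewrite (rank_inj h) v_self.
apply: contraNN => /eqP/v_eq0 ->; by rewrite rank_self.
Qed.

End Geo.

End GeoM.
Import GeoM.

Module CoreM.
Set Implicit Arguments.
Unset Strict Implicit.
Unset Printing Implicit Defensive.
Import Order.TTheory GRing.Theory Num.Theory.

Definition bitn (x i : nat) : bool := odd (x.-1 %/ 2 ^ i).

Section Proto.
Variables (e L : nat).
Definition Dph (f : nat -> bool) (t : nat) := has (fun j => f (t * L + j)) (iota 0 L).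
Definition candf (f : nat -> bool) x t :=
  all (fun s => Dph f s ==> bitn x (e - s.+1)) (iota 0 t).
Definition subt x j := (j == 0) || bitn x j.-1.
Definition testf f x g :=
  candf f x (g %/ L) && bitn x (e - (g %/ L).+1) && subt x (g %% L).

Lemma candfS f x t : candf f x t.+1 = candf f x t && (Dph f t ==> bitn x (e - t.+1)).
Proof. by rewrite /candf -addn1 iotaD all_cat /= add0n addn1 andbT. Qed.

Lemma candf_ext f f' x t : (forall i, i < t * L -> f i = f' i) ->
  candf f x t = candf f' x t.
Proof.
move=> h; apply: eq_in_all => s; rewrite mem_iota /= => hs.
congr (_ ==> _); apply: eq_in_has => j; rewrite mem_iota /= => hj.
apply: h.
have : s.+1 * L <= t * L by apply: leq_mul.
rewrite mulSn; lia.
Qed.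

Lemma eq_div2 a b : (a == b) = (a %/ 2 == b %/ 2) && (odd a == odd b).
Proof.
apply/eqP/andP => [-> //|[/eqP h1 /eqP h2]].
by rewrite -(odd_double_half a) -(odd_double_half b) -!divn2 h1 h2.
Qed.

Section Core.
Variables (n : nat) (ids : 'I_n -> nat) (B : nat -> bool) (beta : nat -> bool).
Hypothesis idsinj : injective ids.
Hypothesis idspos : forall k, 0 < ids k.
Hypothesis idsbnd : forall k, (ids k).-1 < 2 ^ e.
Hypothesis L0 : 0 < L.
Hypothesis HB0 : B 0 = false.
Hypothesis HD : forall S : {set 'I_n}, S != set0 -> S != setT ->
  has (fun j => B #|S :&: [set k | subt (ids k) j]|) (iota 0 L).
Hypothesis hbeta : forall g, beta g = B #|[set k | testf beta (ids k) g]|.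
Variable k0 : 'I_n.

Definition St t := [set k | candf beta (ids k) t && bitn (ids k) (e - t.+1)].

Lemma Dph_St t : Dph beta t = has (fun j => B #|St t :&: [set k | subt (ids k) j]|) (iota 0 L).
Proof.
apply: eq_in_has => j; rewrite mem_iota /= => hj.
rewrite hbeta; congr B; apply: eq_card => k; rewrite !inE /testf.
by rewrite divnMDl // modnMDl divn_small // addn0 modn_small.
Qed.

Lemma Dph0 t : St t = set0 -> Dph beta t = false.
Proof.
move=> h; rewrite Dph_St h; apply/hasPn => j _.
by rewrite set0I cards0 HB0.
Qed.

Lemma Dph1 t : St t != set0 -> St t != setT -> Dph beta t.
Proof. by move=> h1 h2; rewrite Dph_St; apply: HD. Qed.

Definition M := [arg max_(k > k0) ids k].
Lemma Mmax k : ids k <= ids M.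
Proof. by rewrite /M; case: arg_maxnP => // i _ h; apply: h. Qed.

Definition y k := (ids k).-1.
Definition A t k := y k %/ 2 ^ (e - t) == y M %/ 2 ^ (e - t).

Lemma A0 k : A 0 k.
Proof. by rewrite /A subn0 !divn_small ?idsbnd. Qed.

Lemma Ae k : A e k -> k = M.
Proof.
rewrite /A subnn expn0 !divn1 /y => /eqP h; apply: idsinj.
have := idspos k; have := idspos M; lia.
Qed.

Lemma AS t k : t < e -> A t.+1 k =
  A t k && (bitn (ids k) (e - t.+1) == bitn (ids M) (e - t.+1)).
Proof.
move=> te; rewrite /A /bitn eq_div2 -!divnMA -expnSr.
by have -> : (e - t.+1).+1 = e - t by lia.
Qed.

Lemma Amax t k : t < e -> A t k -> bitn (ids k) (e - t.+1) ->
  bitn (ids M) (e - t.+1) = true.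
Proof.
move=> te; rewrite /A /bitn -/(y k) -/(y M).
have -> : e - t = (e - t.+1).+1 by lia.
rewrite expnSr !divnMA.
set qk := y k %/ 2 ^ (e - t.+1); set qM := y M %/ 2 ^ (e - t.+1).
move=> /eqP h ok; apply/negPn/negP => oM.
have : qM < qk.
  rewrite -(odd_double_half qM) -(odd_double_half qk) -!divn2 h (negbTE oM) ok.
  by rewrite add0n add1n.
move=> lt.
have : y k <= y M by have := Mmax k; rewrite /y; lia.
move/(leq_div2r (2 ^ (e - t.+1))); rewrite -/qk -/qM; lia.
Qed.

Lemma cand_A t : t <= e -> forall k, candf beta (ids k) t = A t k.
Proof.
elim: t => [_ k|t IH te k]; first by rewrite A0.
have te' : t < e by [].
rewrite candfS (AS _ te') (IH (ltnW te')).
have StE : St t = [set k | A t k && bitn (ids k) (e - t.+1)].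
  by apply/setP => k'; rewrite !inE (IH (ltnW te')).
case oM : (bitn (ids M) (e - t.+1)).
- have MS : M \in St t by rewrite StE inE oM andbT /A.
  have [ST|nST] := eqVneq (St t) setT.
    have : k \in St t by rewrite ST inE.
    by rewrite StE inE => /andP[-> ->]; rewrite implybT.
  rewrite Dph1 //; last by apply/set0Pn; exists M.
  by rewrite implyTb eqb_id.
- rewrite Dph0; last first.
    apply/setP => k'; rewrite StE !inE; apply/negbTE/negP => /andP[h1 h2].
    by have := Amax te' h1 h2; rewrite oM.
  rewrite implyFb andbT eqbF_neg.
  case Ak: (A t k); rewrite ?andTb ?andFb //; apply/esym/negP => ok.
  by have := Amax te' Ak ok; rewrite oM.
Qed.

Lemma core : exists M', forall j, candf beta (ids j) e = (j == M').
Proof.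
exists M => j; rewrite cand_A //.
apply/idP/eqP => [/Ae //|->]; exact: eqxx.
Qed.

End Core.
End Proto.

End CoreM.
Import CoreM.

Module ObsM.
Set Implicit Arguments.
Unset Strict Implicit.
Unset Printing Implicit Defensive.
Import Order.TTheory GRing.Theory Num.Theory.

Section Obs.
Variables (R : realType) (n : nat) (p : 'I_n -> R).
Hypothesis hp : forall k, (0 <= p k < 1)%R.
Hypothesis hinj : injective p.
Hypothesis n0 : (0 < n)%N.
Variable act : 'I_n -> bool.
Let a := #|[set k | act k]|.

Lemma cardC_act : (a + #|[set k | ~~ act k]| = n)%N.
Proof.
have hc := cardsC [set k | act k]; rewrite card_ord in hc.
rewrite -[X in (_ = X)%N]hc; congr (_ + _)%N; apply: eq_card => k.
by rewrite !inE.
Qed.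

Lemma shiftB : shift (fun k => if act k then Right else Defs.Left) = (a%:Z - (n - a)%:Z)%R.
Proof.
have e1 : [set k | is_right (if act k then Right else Defs.Left)] = [set k | act k].
  by apply/setP => k; rewrite !inE; case: (act k).
have e2 : [set k | Defs.is_left (if act k then Right else Defs.Left)] = [set k | ~~ act k].
  by apply/setP => k; rewrite !inE; case: (act k).
have hn : (n - a = #|[set k | ~~ act k]|)%N.
  by rewrite -[X in (X - a)%N]cardC_act addKn.
by rewrite /shift e1 e2 hn.
Qed.

Lemma shiftL : shift (fun k => if act k then Right else Idle) = (a%:Z)%R.
Proof.
have e1 : [set k | is_right (if act k then Right else Idle)] = [set k | act k].
  by apply/setP => k; rewrite !inE; case: (act k).
have e2 : [set k | Defs.is_left (if act k then Right else Idle)] = set0.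
  by apply/setP => k; rewrite !inE; case: (act k).
by rewrite /shift e1 e2 cards0 subr0.
Qed.

Lemma a_le : (a <= n)%N.
Proof. by rewrite -cardC_act leq_addr. Qed.

Lemma modB : absz (modz (a%:Z - (n - a)%:Z)%R n) = (a.*2 %% n)%N.
Proof.
rewrite -subzn ?a_le //.
have -> : (a%:Z - (n%:Z - a%:Z))%R = ((-1) * n%:Z + (a.*2)%:Z)%R.
  by rewrite -addnn PoszD; ring.
by rewrite modzMDl modz_nat.
Qed.

Lemma RP_basic k : (displacement p (fun k => if act k then Right else Defs.Left) k != 0)%R
  = ~~ (n %| a.*2)%N.
Proof. by rewrite disp_ne0 // shiftB modB. Qed.

Lemma RP_lazy k : (displacement p (fun k => if act k then Right else Idle) k != 0)%R
  = ~~ (n %| a)%N.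
Proof. by rewrite disp_ne0 // shiftL modz_nat. Qed.

Lemma ex_act : [exists m, act m] = (0 < a)%N.
Proof.
rewrite card_gt0; by apply/existsP/set0Pn => [[m hm]|[m hm]]; exists m; rewrite ?inE in hm *.
Qed.

Lemma ex_nact : [exists m, ~~ act m] = (a < n)%N.
Proof.
rewrite -[X in (a < X)%N]cardC_act -{1}(addn0 a) ltn_add2l card_gt0.
by apply/existsP/set0Pn => [[m hm]|[m hm]]; exists m; rewrite ?inE in hm *.
Qed.

Lemma RP_perc k :
  (first_collision p (fun k => if act k then Right else Defs.Left) k != None)
  = (0 < a)%N && (a < n)%N.
Proof.
rewrite -ex_act -ex_nact /first_collision.
have sE : forall x : R, (Some x != None) = true by [].
have nE : ((None : option R) != None) = false by rewrite eqxx.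
case hk: (act k).
- case: pickP => [m /andP[hm _]|hn].
    rewrite sE; apply/esym/andP; split; apply/existsP; first by exists k.
    by exists m; move: hm; case: (act m).
  have -> : [exists m, act m] by apply/existsP; exists k.
  rewrite nE andTb. apply/esym/negbTE/negP => /existsP[m0 hm0].
  have P0 : Defs.is_left (if act m0 then Right else Defs.Left) by rewrite (negbTE hm0).
  case: (@arg_minnP _ m0 (fun m => Defs.is_left (if act m then Right else Defs.Left)) (cw_rank p k) P0) => i hi hmin.
  have := hn i; rewrite hi andTb; move/negP; apply; apply/forallP => m'.
  by apply/implyP => /hmin.
- case: pickP => [m /andP[hm _]|hn].
    rewrite sE; apply/esym/andP; split; apply/existsP; last by exists k; rewrite hk.
    by exists m; move: hm; case: (act m).
  have -> : [exists m, ~~ act m] by apply/existsP; exists k; rewrite hk.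
  rewrite nE andbT; apply/esym/negbTE/negP => /existsP[m0 hm0].
  have P0 : is_right (if act m0 then Right else Defs.Left) by rewrite hm0.
  case: (@arg_minnP _ m0 (fun m => is_right (if act m then Right else Defs.Left)) (ccw_rank p k) P0) => i hi hmin.
  have := hn i; rewrite hi andTb; move/negP; apply; apply/forallP => m'.
  by apply/implyP => /hmin.
Qed.

End Obs.

End ObsM.
Import ObsM.

Module RunM.
Set Implicit Arguments.
Unset Strict Implicit.
Unset Printing Implicit Defensive.
Import Order.TTheory GRing.Theory Num.Theory.

Section Run.
Variables (R : realType) (mo : model) (passive : dir) (bitf : R * option R -> bool) (e L : nat).

Definition ptest x (bs : seq bool) := testf e L (nth false bs) x (size bs).
Definition mkalg : algorithm R :=
  Algo (e * L) (fun x h => if ptest x (map bitf h) then Right else passive)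
       (fun x h => candf e L (nth false (map bitf h)) x e).

Section N.
Variables (n : nat) (ids : 'I_n -> nat) (B : nat -> bool).
Hypothesis RP : forall p : 'I_n -> R, (forall k, 0 <= p k < 1)%R -> injective p ->
  forall (act : 'I_n -> bool) k,
  bitf (observation p (fun k => if act k then Right else passive) mo k) = B #|[set k | act k]|.
Hypothesis n0 : (0 < n)%N.

Fixpoint gb g := if g is g'.+1 then rcons (gb g') (B #|[set k | ptest (ids k) (gb g')]|)
  else [::].

Lemma run_inv (p0 : 'I_n -> R) : (forall k, 0 <= p0 k < 1)%R -> injective p0 -> forall t,
  (forall k, 0 <= (run mo mkalg ids p0 t).1 k < 1)%R /\ injective (run mo mkalg ids p0 t).1 /\
  forall k, map bitf ((run mo mkalg ids p0 t).2 k) = gb t.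
Proof.
move=> h0 i0; elim=> [|t [IH1 [IH2 IH3]]]; first by [].
rewrite /=; case E: (run mo mkalg ids p0 t) => [p h]; rewrite E /= in IH1 IH2 IH3.
have dE : (fun k => if ptest (ids k) (map bitf (h k)) then Right else passive) =
          (fun k => if ptest (ids k) (gb t) then Right else passive).
  by apply: functional_extensionality => k; rewrite IH3.
rewrite dE; split; last split.
- by move=> k; apply: new_pos_rng.
- exact: new_pos_inj.
- by move=> k; rewrite map_rcons IH3 RP.
Qed.
Definition beta g := nth false (gb g.+1) g.

Lemma size_gb g : size (gb g) = g.
Proof. by elim: g => //= g IH; rewrite size_rcons IH. Qed.

Lemma nth_gb g i : (i < g)%N -> nth false (gb g) i = beta i.
Proof.
elim: g => // g IH; rewrite ltnS leq_eqVlt => /orP[/eqP ->|hi]; first by [].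
by rewrite /= nth_rcons size_gb hi IH.
Qed.

Lemma hbeta g : beta g = B #|[set k | testf e L beta (ids k) g]|.
Proof.
rewrite {1}/beta /= nth_rcons size_gb ltnn eqxx; congr B; apply: eq_card => k.
rewrite !inE /ptest size_gb /testf (@candf_ext _ _ _ beta) // => i hi.
apply: nth_gb; apply: leq_trans hi _; exact: leq_trunc_div.
Qed.

Lemma gen_leader (p0 : 'I_n -> R) : (forall k, 0 <= p0 k < 1)%R -> injective p0 ->
  injective ids -> (forall k, 0 < ids k)%N -> (forall k, (ids k).-1 < 2 ^ e)%N ->
  (0 < L)%N -> B 0 = false ->
  (forall S : {set 'I_n}, S != set0 -> S != setT ->
     has (fun j => B #|S :&: [set k | subt (ids k) j]|) (iota 0 L)) ->
  leader_elected mkalg ids (run mo mkalg ids p0 (rounds mkalg)).2.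
Proof.
move=> hp0 i0 hi hpos hb L0 HB0 HD.
have [_ [_ H3]] := run_inv hp0 i0 (e * L).
have k0 : 'I_n by exists 0%N.
have [M hM] := core hi hpos hb L0 HB0 HD hbeta k0.
exists M => j; rewrite /= H3 -(hM j); apply: candf_ext => i hi'.
exact: nth_gb.
Qed.
End N.

Lemma gen_solves N par (Bn : nat -> nat -> bool) :
  (N <= 2 ^ e)%N -> (0 < L)%N ->
  (forall n, (4 < n)%N -> (n <= N)%N -> odd n = par ->
    forall p : 'I_n -> R, (forall k, 0 <= p k < 1)%R -> injective p ->
    forall (act : 'I_n -> bool) k,
    bitf (observation p (fun k => if act k then Right else passive) mo k) = Bn n #|[set k | act k]|) ->
  (forall n, (4 < n)%N -> odd n = par -> Bn n 0 = false) ->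
  (forall n (ids : 'I_n -> nat), (4 < n)%N -> (n <= N)%N -> odd n = par -> injective ids ->
    (forall k, 0 < ids k <= N)%N ->
    forall S : {set 'I_n}, S != set0 -> S != setT ->
     has (fun j => Bn n #|S :&: [set k | subt (ids k) j]|) (iota 0 L)) ->
  solves mo N par mkalg.
Proof.
move=> hN L0 HRP HB0 HD n n4 nN np ids hi hids p hp hinj.
apply: gen_leader => //.
- exact: HRP.
- by apply: (leq_trans _ n4).
- by move=> k; have /andP[] := hids k.
- move=> k; have /andP[h1 h2] := hids k; apply: leq_trans hN; lia.
- exact: HB0.
- exact: HD.
Qed.
End Run.

End RunM.
Import RunM.

Module InstM.
Set Implicit Arguments.
Unset Strict Implicit.
Unset Printing Implicit Defensive.
Import Order.TTheory GRing.Theory Num.Theory.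

Lemma bits_eq e x y : x < 2 ^ e -> y < 2 ^ e ->
  (forall i, i < e -> odd (x %/ 2 ^ i) = odd (y %/ 2 ^ i)) -> x = y.
Proof.
elim: e x y => [|e IH] x y hx hy h.
  by move: hx hy; rewrite expn0 !ltnS !leqn0 => /eqP -> /eqP ->.
have h0 := h 0 (ltn0Sn _); rewrite expn0 !divn1 in h0.
have e2 : x %/ 2 = y %/ 2.
  apply: IH.
  - by rewrite ltn_divLR // -expnSr.
  - by rewrite ltn_divLR // -expnSr.
  - move=> i hi; rewrite -!divnMA -expnS; exact: h.
by rewrite -(odd_double_half x) -(odd_double_half y) -!divn2 e2 h0.
Qed.

Lemma card_mid n (S : {set 'I_n}) : S != set0 -> S != setT -> 0 < #|S| < n.
Proof.
move=> h1 h2; rewrite card_gt0 h1 /=.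
by rewrite -[n in _ < n]card_ord -cardsT; apply: proper_card; rewrite properT.
Qed.

Lemma HD_simple n (ids : 'I_n -> nat) (B : nat -> bool) :
  (forall a, 0 < a < n -> B a) ->
  forall S : {set 'I_n}, S != set0 -> S != setT ->
     has (fun j => B #|S :&: [set k | subt (ids k) j]|) (iota 0 1).
Proof.
move=> hB S h1 h2 /=; rewrite orbF.
have -> : S :&: [set k | subt (ids k) 0] = S by apply/setP => k; rewrite !inE andbT.
by apply: hB; apply: card_mid.
Qed.

Lemma HD_even e n (ids : 'I_n -> nat) : 4 < n -> injective ids ->
  (forall k, 0 < ids k) -> (forall k, (ids k).-1 < 2 ^ e) ->
  forall S : {set 'I_n}, S != set0 -> S != setT ->
     has (fun j => ~~ (n %| #|S :&: [set k | subt (ids k) j]|.*2)) (iota 0 e.+1).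
Proof.
move=> n4 hi hpos hb S h1 h2.
have /andP[c1 c2] := card_mid h1 h2.
have ndiv : forall a, 0 < a -> a.*2 < n -> ~~ (n %| a.*2).
  move=> a a0 an; apply/negP => /dvdn_leq; rewrite -addnn; lia.
have [hd|hd] := boolP (n %| #|S|.*2); last first.
  apply/hasP; exists 0; first by rewrite mem_iota.
  have -> : S :&: [set k | subt (ids k) 0] = S by apply/setP => k; rewrite !inE andbT.
  exact: hd.
have e2 : #|S|.*2 = n.
  move: hd => /dvdnP [q hq]; rewrite -addnn in hq *.
  have : q = 1 by nia.
  by move=> q1; rewrite hq q1 mul1n.
have : 1 < #|S| by lia.
move=> /card_gt1P [k1 [k2 [hk1 hk2 nk]]].
have nid : (ids k1).-1 != (ids k2).-1.
  apply/eqP => h; move/eqP: nk; apply; apply: hi.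
  have := hpos k1; have := hpos k2; lia.
have : [exists i : 'I_e, odd ((ids k1).-1 %/ 2 ^ i) != odd ((ids k2).-1 %/ 2 ^ i)].
  rewrite -negb_forall; apply/negP => /forallP h; apply: (negP nid); apply/eqP.
  apply: bits_eq (hb k1) (hb k2) _ => i ie; exact: (eqP (h (Ordinal ie))).
move=> /existsP [[i ie] /= hbit].
pose T := [set k | subt (ids k) i.+1].
have [u [v [hu hv hTu hTv]]] : exists u v, [/\ u \in S, v \in S, u \in T & v \notin T].
  rewrite /T; case o1 : (odd ((ids k1).-1 %/ 2 ^ i)); move: hbit; rewrite o1;
    case o2 : (odd ((ids k2).-1 %/ 2 ^ i)) => // _.
    by exists k1, k2; rewrite !inE /subt /bitn /= o1 o2.
  by exists k2, k1; rewrite !inE /subt /bitn /= o1 o2.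
apply/orP; right; apply/hasP; exists i.+1; first by rewrite mem_iota; lia.
apply: ndiv.
  by rewrite card_gt0; apply/set0Pn; exists u; rewrite inE hu hTu.
have : #|S :&: T| < #|S|.
  apply: proper_card; apply/properP; split; first exact: subsetIl.
  by exists v => //; rewrite inE (negbTE hTv) andbF.
move=> h; move: e2; rewrite -!addnn /T in h *; move=> hn; apply: leq_trans (eq_leq hn); rewrite -addSn; exact: leq_add h (ltnW h).
Qed.

Lemma ndvd_small n a : 0 < a < n -> ~~ (n %| a).
Proof. move=> /andP[a0 an]; apply/negP => /(dvdn_leq a0); lia. Qed.

Definition bitfD (R : realType) (o : R * option R) := (o.1 != 0)%R.
Definition bitfP (R : realType) (o : R * option R) := o.2 != None.


End InstM.
Import InstM.

Theorem lemma10 (R : realType) :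
  (exists c : nat, forall N : nat, exists alg : algorithm R,
      valid Basic alg /\ (rounds alg <= c * (up_log 2 N) ^ 2)%N /\
      solves Basic N false alg) /\
  (forall N : nat, exists alg : algorithm R,
      valid Basic alg /\ (rounds alg <= up_log 2 N)%N /\ solves Basic N true alg) /\
  (forall (N : nat) (par : bool), exists alg : algorithm R,
      valid Lazy alg /\ (rounds alg <= up_log 2 N)%N /\ solves Lazy N par alg) /\
  (forall (N : nat) (par : bool), exists alg : algorithm R,
      valid Perceptive alg /\ (rounds alg <= up_log 2 N)%N /\
      solves Perceptive N par alg).
Proof.
have hN : forall N, N <= 2 ^ up_log 2 N by move=> N; exact: up_logP.
have hpos : forall N n (ids : 'I_n -> nat), (forall k, 0 < ids k <= N) -> forall k, 0 < ids k.
  by move=> N n ids h k; have /andP[] := h k.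
have hb : forall N n (ids : 'I_n -> nat), (forall k, 0 < ids k <= N) ->
    forall k, (ids k).-1 < 2 ^ up_log 2 N.
  move=> N n ids h k; have /andP[h1 h2] := h k; have := hN N; lia.
split; last split; last split.
- exists 2 => N; exists (mkalg Defs.Left (@bitfD R) (up_log 2 N) (up_log 2 N).+1).
  split; last split.
  + by move=> i h /=; case: ifP.
  + rewrite /=; nia.
  + apply: (gen_solves (Bn := fun n a => ~~ (n %| a.*2))) => //.
    * move=> n n4 nN np p hp hinj act k; rewrite /bitfD /observation /=.
      by apply: RP_basic => //; apply: leq_trans n4.
    * by move=> n _ _; rewrite dvdn0.
    * move=> n ids n4 nN np hi hids S h1 h2.
      by apply: HD_even => //; [exact: hpos hids | exact: hb hids].
- move=> N; exists (mkalg Defs.Left (@bitfD R) (up_log 2 N) 1).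
  split; last split.
  + by move=> i h /=; case: ifP.
  + by rewrite /= muln1.
  + apply: (gen_solves (Bn := fun n a => ~~ (n %| a.*2))) => //.
    * move=> n n4 nN np p hp hinj act k; rewrite /bitfD /observation /=.
      by apply: RP_basic => //; apply: leq_trans n4.
    * by move=> n _ _; rewrite dvdn0.
    * move=> n ids n4 nN np hi hids; apply: (@HD_simple n ids (fun a => ~~ (n %| a.*2))) => a ha.
      by rewrite -muln2 Gauss_dvdl ?coprimen2 ?np //; apply: ndvd_small.
- move=> N par; exists (mkalg Idle (@bitfD R) (up_log 2 N) 1).
  split; last split.
  + by [].
  + by rewrite /= muln1.
  + apply: (gen_solves (Bn := fun n a => ~~ (n %| a))) => //.
    * move=> n n4 nN np p hp hinj act k; rewrite /bitfD /observation /=.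
      by apply: RP_lazy => //; apply: leq_trans n4.
    * by move=> n _ _; rewrite dvdn0.
    * move=> n ids n4 nN np hi hids; apply: (@HD_simple n ids (fun a => ~~ (n %| a))) => a ha.
      exact: ndvd_small.
- move=> N par; exists (mkalg Defs.Left (@bitfP R) (up_log 2 N) 1).
  split; last split.
  + by move=> i h /=; case: ifP.
  + by rewrite /= muln1.
  + apply: (gen_solves (Bn := fun n a => (0 < a) && (a < n))) => //.
    * move=> n n4 nN np p hp hinj act k; rewrite /bitfP /observation /=.
      exact: RP_perc.
    * move=> n ids n4 nN np hi hids; apply: (@HD_simple n ids (fun a => (0 < a) && (a < n))) => a ha.
      exact: ha.
Qed.
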